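(* For every integer $r\ge1$ and every $n\ge0$, $$B^{(r)}_{n,q}(x)=\sum_{k=0}^{n}\binom{n}{k}_q\left(\int_0^1B^{(r)}_{n-k,q}(y)\,d_qy\right)B_{k,q}(x)=\sum_{k=0}^{n}\binom{n}{k}_qB^{(r-1)}_{n-k,q}\,B_{k,q}(x);$$ in particular $\int_0^1B^{(r)}_{m,q}(y)\,d_qy=B^{(r-1)}_{m,q}$ for all $m\ge0$.
   Context: Fix $q$ with $0<q<1$. For an integer $n\geq 0$ let $[n]_q=\frac{1-q^n}{1-q}$, $[n]_q!=[n]_q[n-1]_q\cdots[1]_q$ (with $[0]_q!=1$), and for $0\le l\le n$ let $\binom{n}{l}_q=\frac{[n]_q!}{[l]_q!\,[n-l]_q!}$. Let $e_q(t)=\sum_{n\ge0}\frac{t^n}{[n]_q!}$ (a formal power series). The $q$-Bernoulli polynomials $B_{n,q}(x)$ are defined by $\frac{t}{e_q(t)-1}e_q(xt)=\sum_{n\ge0}B_{n,q}(x)\frac{t^n}{[n]_q!}$. For an integer $r\ge0$, the $q$-Bernoulli polynomials of order $r$ are defined by $\left(\frac{t}{e_q(t)-1}\right)^{r}e_q(xt)=\sum_{n\ge0}B^{(r)}_{n,q}(x)\frac{t^n}{[n]_q!}$, with $B^{(r)}_{n,q}=B^{(r)}_{n,q}(0)$ (so $B^{(0)}_{n,q}=\delta_{n,0}$ and $B^{(1)}_{n,q}(x)=B_{n,q}(x)$). The Jackson $q$-integral is $\int_0^1 f(y)\,d_qy=(1-q)\sum_{a=0}^{\infty}f(q^a)q^a$.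 *)

(* Defs.v *)
From Stdlib Require Import Reals Arith ClassicalEpsilon.
Open Scope R_scope.

Definition qnum (q : R) (n : nat) : R := (1 - q ^ n) / (1 - q).

Fixpoint qfact (q : R) (n : nat) : R :=
  match n with
  | O => 1
  | S m => qnum q (S m) * qfact q m
  end.

Definition qbinom (q : R) (n l : nat) : R :=
  qfact q n / (qfact q l * qfact q (n - l)).

(* Coefficients of the power series (e_q(t) - 1)/t = sum_j t^j / [j+1]_q! *)
Definition ecoef (q : R) (j : nat) : R := / qfact q (S j).

(* bvec q n k = k-th coefficient of t/(e_q(t)-1) (valid for k <= n),
   computed as the inverse power series of (e_q(t)-1)/t:
   b_0 = 1, b_k = - sum_{j=1}^k c_j b_{k-j}  (c_0 = 1). *)
Fixpoint bvec (q : R) (n : nat) : nat -> R :=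
  match n with
  | O => fun k => if Nat.eqb k 0 then 1 else 0
  | S n' =>
      let f := bvec q n' in
      fun k => if Nat.leb k n' then f k
               else - sum_f_R0 (fun i => ecoef q (S i) * f (n' - i)%nat) n'
  end.

(* coefficient of t^n in t/(e_q(t)-1) *)
Definition tdcoef (q : R) (n : nat) : R := bvec q n n.

(* coefficient of t^n in (t/(e_q(t)-1))^r *)
Fixpoint tdpow (q : R) (r n : nat) : R :=
  match r with
  | O => if Nat.eqb n 0 then 1 else 0
  | S r' => sum_f_R0 (fun i => tdcoef q i * tdpow q r' (n - i)) n
  end.

(* (t/(e_q(t)-1))^r e_q(xt) = sum_n B^{(r)}_{n,q}(x) t^n/[n]_q! *)
Definition qBernPoly (q : R) (r n : nat) (x : R) : R :=
  qfact q n * sum_f_R0 (fun k => tdpow q r (n - k) * (x ^ k / qfact q k)) n.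

Definition qBernNum (q : R) (r n : nat) : R := qBernPoly q r n 0.

Definition jackson_summand (q : R) (f : R -> R) (a : nat) : R := f (q ^ a) * q ^ a.

Definition jackson_converges (q : R) (f : R -> R) : Prop :=
  exists S, infinite_sum (jackson_summand q f) S.

Definition jackson_integral (q : R) (f : R -> R) : R :=
  (1 - q) * epsilon (inhabits 0) (fun S => infinite_sum (jackson_summand q f) S).

(* Main.v *)
Require Import Defs.
From Stdlib Require Import Reals Arith Lia Lra ClassicalEpsilon.
Open Scope R_scope.

Definition conv (a b : nat -> R) (n : nat) : R :=
  sum_f_R0 (fun i => a i * b (n - i)%nat) n.

Lemma sum_shift (f : nat -> R) n :
  sum_f_R0 f (S n) = f 0%nat + sum_f_R0 (fun i => f (S i)) n.
Proof.
  induction n as [|n IH].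
  - simpl. reflexivity.
  - rewrite tech5, IH, tech5. ring.
Qed.

Lemma sum_rev (f : nat -> R) n :
  sum_f_R0 f n = sum_f_R0 (fun i => f (n - i)%nat) n.
Proof.
  revert f; induction n as [|n IH]; intro f.
  - simpl. reflexivity.
  - rewrite sum_shift, (IH (fun i => f (S i))), tech5.
    replace (S n - S n)%nat with 0%nat by lia.
    rewrite Rplus_comm. f_equal. apply sum_eq. intros i Hi.
    f_equal. lia.
Qed.

Lemma conv_comm a b n : conv a b n = conv b a n.
Proof.
  unfold conv. rewrite sum_rev. apply sum_eq. intros i Hi.
  replace (n - (n - i))%nat with i by lia. ring.
Qed.

Lemma conv_ext_l a a' b n : (forall k, a k = a' k) -> conv a b n = conv a' b n.
Proof. intros H; unfold conv; apply sum_eq; intros; rewrite H; reflexivity. Qed.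

Lemma conv_ext_r a b b' n : (forall k, b k = b' k) -> conv a b n = conv a b' n.
Proof. intros H; unfold conv; apply sum_eq; intros; rewrite H; reflexivity. Qed.

Lemma triangle (g : nat -> nat -> R) n :
  sum_f_R0 (fun i => sum_f_R0 (fun j => g i j) i) n =
  sum_f_R0 (fun j => sum_f_R0 (fun k => g (j + k)%nat j) (n - j)) n.
Proof.
  induction n as [|n IH].
  - simpl. reflexivity.
  - rewrite tech5, IH. rewrite (tech5 (fun j => sum_f_R0 _ _)).
    replace (S n - S n)%nat with 0%nat by lia.
    transitivity (sum_f_R0 (fun j => sum_f_R0 (fun k => g (j + k)%nat j) (n - j) + g (S n) j) n + g (S n) (S n)).
    + rewrite plus_sum, (tech5 (fun j => g (S n) j)). rewrite Rplus_assoc; reflexivity.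
    + f_equal.
      * apply sum_eq. intros j Hj.
        replace (S n - j)%nat with (S (n - j)) by lia. rewrite tech5.
        replace (j + S (n - j))%nat with (S n) by lia. reflexivity.
      * simpl. rewrite Nat.add_0_r. reflexivity.
Qed.

Lemma conv_assoc a b c n : conv (conv a b) c n = conv a (conv b c) n.
Proof.
  unfold conv.
  transitivity (sum_f_R0 (fun i => sum_f_R0 (fun j => a j * b (i - j)%nat * c (n - i)%nat) i) n).
  - apply sum_eq. intros i Hi. rewrite Rmult_comm, scal_sum. apply sum_eq. intros; ring.
  - rewrite triangle. apply sum_eq. intros j Hj. rewrite scal_sum. apply sum_eq.
    intros k Hk. replace (j + k - j)%nat with k by lia.
    replace (n - (j + k))%nat with (n - j - k)%nat by lia. ring.
Qed.

Definition delta (k : nat) : R := if Nat.eqb k 0 then 1 else 0.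

Lemma conv_delta a n : conv a delta n = a n.
Proof.
  unfold conv. destruct n as [|n].
  - simpl. unfold delta. simpl. ring.
  - rewrite tech5. rewrite sum_eq_R0.
    + rewrite Nat.sub_diag. unfold delta; simpl. ring.
    + intros i Hi. unfold delta. replace (Nat.eqb (S n - i) 0) with false.
      ring. symmetry. apply Nat.eqb_neq. lia.
Qed.

Lemma tdpow0 q k : tdpow q 0 k = delta k.
Proof. reflexivity. Qed.

Lemma tdpowS q r k : tdpow q (S r) k = conv (tdcoef q) (tdpow q r) k.
Proof. reflexivity. Qed.

Lemma tdpow1 q k : tdpow q 1 k = tdcoef q k.
Proof. rewrite tdpowS. rewrite (conv_ext_r _ _ delta). apply conv_delta. intro; reflexivity. Qed.

Lemma bvec_stable q d k : bvec q (k + d) k = bvec q k k.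
Proof.
  induction d as [|d IH].
  - rewrite Nat.add_0_r. reflexivity.
  - replace (k + S d)%nat with (S (k + d)) by lia. simpl.
    replace (Nat.leb k (k + d)) with true. exact IH.
    symmetry. apply Nat.leb_le. lia.
Qed.

Lemma tdcoefS q n :
  tdcoef q (S n) = - sum_f_R0 (fun i => ecoef q (S i) * tdcoef q (n - i)%nat) n.
Proof.
  unfold tdcoef at 1. simpl.
  replace (match n with 0%nat => false | S m' => Nat.leb n m' end) with false
    by (destruct n; [reflexivity| symmetry; apply Nat.leb_gt; lia]).
  f_equal. apply sum_eq. intros i Hi. f_equal. unfold tdcoef.
  replace n with ((n - i) + i)%nat at 1 by lia. apply bvec_stable.
Qed.

Lemma tdcoef0 q : tdcoef q 0 = 1.
Proof. reflexivity. Qed.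

Lemma ecoef0 q : q <> 1 -> ecoef q 0 = 1.
Proof.
  intro H. unfold ecoef. simpl. unfold qnum. simpl.
  field_simplify. reflexivity. intro E. apply H. lra. 
Qed.

Lemma inverse q (hq : q <> 1) m : conv (ecoef q) (tdcoef q) m = delta m.
Proof.
  unfold conv. destruct m as [|n].
  - simpl. rewrite ecoef0 by exact hq. unfold delta; simpl. rewrite tdcoef0; ring.
  - rewrite sum_shift. rewrite ecoef0 by exact hq. rewrite Nat.sub_0_r.
    rewrite tdcoefS. unfold delta; simpl.
    ring.
Qed.

Lemma qnum_pos q m : 0 < q -> q < 1 -> 0 < qnum q (S m).
Proof.
  intros h0 h1. unfold qnum.
  assert (q ^ S m < 1).
  { destruct (pow_lt_1_compat q (S m)) as [_ H]; [lra|lia|exact H]. }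
  apply Rdiv_lt_0_compat; lra.
Qed.

Lemma qfact_pos q m : 0 < q -> q < 1 -> 0 < qfact q m.
Proof.
  intros h0 h1. induction m as [|m IH]; simpl.
  - lra.
  - apply Rmult_lt_0_compat; [apply qnum_pos|]; assumption.
Qed.

Lemma qBP_conv q r n x :
  qBernPoly q r n x = qfact q n * conv (fun k => x ^ k / qfact q k) (tdpow q r) n.
Proof. unfold qBernPoly, conv. f_equal. apply sum_eq. intros; ring. Qed.

Lemma qBN q r n : qBernNum q r n = qfact q n * tdpow q r n.
Proof.
  unfold qBernNum, qBernPoly. f_equal. destruct n as [|n].
  - simpl. field.
  - rewrite sum_shift. rewrite sum_eq_R0.
    + simpl. field.
    + intros. rewrite pow_ne_zero by lia. unfold Rdiv. ring.
Qed.

Lemma claim3 q (h0 : 0 < q) (h1 : q < 1) r n x :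
  qBernPoly q (S r) n x =
    sum_f_R0 (fun k => qbinom q n k * qBernNum q r (n - k) * qBernPoly q 1 k x) n.
Proof.
  set (X := fun k => x ^ k / qfact q k).
  transitivity (qfact q n * conv (conv X (tdcoef q)) (tdpow q r) n).
  - rewrite qBP_conv, conv_assoc. f_equal.
  - unfold conv at 1. rewrite scal_sum. apply sum_eq. intros k Hk.
    rewrite qBN, qBP_conv. rewrite (conv_ext_r _ (tdpow q 1) (tdcoef q)) by (intro; apply tdpow1).
    unfold qbinom.
    pose proof (qfact_pos q k h0 h1). pose proof (qfact_pos q (n - k) h0 h1).
    unfold X. field. split; lra.
Qed.

Lemma claim4_alg q (h0 : 0 < q) (h1 : q < 1) r m :
  conv (tdpow q (S r)) (ecoef q) m = tdpow q r m.
Proof.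
  rewrite (conv_ext_l _ (conv (tdpow q r) (tdcoef q))) by (intro; rewrite tdpowS; apply conv_comm).
  rewrite conv_assoc.
  rewrite (conv_ext_r _ _ delta). apply conv_delta.
  intro k. rewrite conv_comm. apply inverse. lra.
Qed.

Lemma inf_sum_ext f g l : (forall a, f a = g a) -> infinite_sum f l -> infinite_sum g l.
Proof.
  intros H Hf eps He. destruct (Hf eps He) as [N HN]. exists N. intros n Hn.
  rewrite <- (sum_eq f g n) by (intros; apply H). apply HN; exact Hn.
Qed.

Lemma inf_sum_plus f g l1 l2 : infinite_sum f l1 -> infinite_sum g l2 ->
  infinite_sum (fun a => f a + g a) (l1 + l2).
Proof.
  intros Hf Hg. assert (Un_cv (fun N => sum_f_R0 f N + sum_f_R0 g N) (l1 + l2)) as H.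
  { apply CV_plus; [exact Hf | exact Hg]. }
  intros eps He. destruct (H eps He) as [N HN]. exists N. intros n Hn.
  rewrite plus_sum. apply HN. exact Hn.
Qed.

Lemma inf_sum_geom q (h0 : 0 < q) (h1 : q < 1) c k :
  infinite_sum (fun a => c * (q ^ a) ^ k * q ^ a) (c / (1 - q ^ S k)).
Proof.
  assert (HP : 0 <= q ^ S k < 1) by (apply pow_lt_1_compat; [lra|lia]).
  pose proof (GP_infinite (q ^ S k)) as G.
  assert (Rabs (q ^ S k) < 1) by (rewrite Rabs_pos_eq; lra).
  specialize (G H). unfold Pser in G.
  assert (Un_cv (fun N => c * sum_f_R0 (fun n => 1 * (q ^ S k) ^ n) N) (c * / (1 - q ^ S k))) as H2.
  { apply CV_mult; [intros eps He; exists 0%nat; intros; unfold Rdist; rewrite Rminus_diag, Rabs_R0; lra | exact G]. }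
  intros eps He. destruct (H2 eps He) as [N HN]. exists N. intros n Hn.
  rewrite <- (sum_eq (fun i => (1 * (q ^ S k) ^ i) * c)).
  - rewrite <- scal_sum. apply HN. exact Hn.
  - intros i _. rewrite <- !pow_mult. rewrite (Rmult_assoc c), <- pow_add.
    replace (i * k + i)%nat with (S k * i)%nat by lia. ring.
Qed.

Lemma jackson_poly q (h0 : 0 < q) (h1 : q < 1) (c : nat -> R) m :
  infinite_sum (fun a => sum_f_R0 (fun k => c k * (q ^ a) ^ k) m * q ^ a)
    (sum_f_R0 (fun k => c k / (1 - q ^ S k)) m).
Proof.
  induction m as [|m IH].
  - simpl. apply (inf_sum_ext (fun a => c 0%nat * (q^a)^0 * q^a)).
    + intros; simpl; ring.
    + apply inf_sum_geom; assumption.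
  - simpl. apply (inf_sum_ext (fun a => sum_f_R0 (fun k => c k * (q ^ a) ^ k) m * q ^ a
         + c (S m) * (q ^ a) ^ (S m) * q ^ a)).
    + intros; simpl; ring.
    + apply inf_sum_plus; [exact IH|]. apply inf_sum_geom; assumption.
Qed.

Lemma jackson_qBP q (h0 : 0 < q) (h1 : q < 1) r m :
  infinite_sum (jackson_summand q (qBernPoly q r m))
    (sum_f_R0 (fun k => qfact q m * tdpow q r (m - k) / qfact q k / (1 - q ^ S k)) m).
Proof.
  eapply inf_sum_ext; [|apply (jackson_poly q h0 h1 (fun k => qfact q m * tdpow q r (m - k) / qfact q k))].
  intro a. unfold jackson_summand, qBernPoly. f_equal. rewrite scal_sum. apply sum_eq.
  intros; unfold Rdiv; ring.
Qed.

Lemma jackson_val q (h0 : 0 < q) (h1 : q < 1) r m :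
  jackson_integral q (qBernPoly q r m) = qfact q m * conv (ecoef q) (tdpow q r) m.
Proof.
  unfold jackson_integral.
  pose proof (jackson_qBP q h0 h1 r m) as J.
  pose proof (epsilon_spec (inhabits 0) (fun S => infinite_sum (jackson_summand q (qBernPoly q r m)) S)
     (ex_intro _ _ J)) as E. simpl in E.
  rewrite (uniqueness_sum _ _ _ E J).
  unfold conv. rewrite !scal_sum. apply sum_eq. intros k Hk.
  unfold ecoef. simpl qfact. unfold qnum.
  pose proof (qfact_pos q k h0 h1).
  assert (q ^ S k < 1) by (apply pow_lt_1_compat; [lra|lia]).
  simpl pow in *. field. repeat split; lra.
Qed.

Theorem theorem4 (q : R) (hq0 : 0 < q) (hq1 : q < 1) (r n : nat) (hr : (1 <= r)%nat) (x : R) :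
  (forall m : nat, jackson_converges q (qBernPoly q r m)) /\
  qBernPoly q r n x =
    sum_f_R0 (fun k => qbinom q n k * jackson_integral q (qBernPoly q r (n - k))
                        * qBernPoly q 1 k x) n /\
  qBernPoly q r n x =
    sum_f_R0 (fun k => qbinom q n k * qBernNum q (r - 1) (n - k) * qBernPoly q 1 k x) n /\
  (forall m : nat, jackson_integral q (qBernPoly q r m) = qBernNum q (r - 1) m).
Proof.
  destruct r as [|r']; [lia|].
  replace (S r' - 1)%nat with r' by lia.
  assert (C4 : forall m, jackson_integral q (qBernPoly q (S r') m) = qBernNum q r' m).
  { intro m. rewrite jackson_val by assumption. rewrite qBN. f_equal.
    rewrite conv_comm. apply claim4_alg; assumption. }
  split; [|split; [|split]].
  - intro m. eexists. apply jackson_qBP; assumption.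
  - rewrite claim3 by assumption. apply sum_eq. intros k _. rewrite C4. reflexivity.
  - apply claim3; assumption.
  - exact C4.
Qed.
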